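(* Let $T$ be an equilateral hyperbolic triangle with side length $a$ and angle $\alpha$, and suppose that either $e^a\in\mathbb{Q}$ or $e^{i\alpha}\in\mathbb{Q}[i]$. Let $\ell$ be the length of a median of $T$ (the geodesic segment from a vertex to the midpoint of the opposite side, which for an equilateral triangle coincides with the area bisector from that vertex). Then $e^\ell\notin\mathbb{Q}$.
   Context: Triangles are non-degenerate, bounded triangles in the hyperbolic plane (curvature $-1$). An area bisector from a vertex is the geodesic segment from that vertex to the opposite side dividing the triangle into two triangles of equal area. *)

(* Defs.v *)
(* hyperbolic plane H^2 (curvature -1) in the hyperboloid model. *)
From Stdlib Require Import Reals Ratan QArith Qreals.
Open Scope R_scope.

Record pt := Pt { x0 : R; x1 : R; x2 : R }.

Definition mink (p q : pt) : R := - x0 p * x0 q + x1 p * x1 q + x2 p * x2 q.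

Definition onH (p : pt) : Prop := mink p p = -1 /\ 0 < x0 p.

Definition arcosh (u : R) : R := ln (u + sqrt (u * u - 1)).

Definition hdist (p q : pt) : R := arcosh (- mink p q).

Definition padd (p q : pt) : pt := Pt (x0 p + x0 q) (x1 p + x1 q) (x2 p + x2 q).
Definition pscale (c : R) (p : pt) : pt := Pt (c * x0 p) (c * x1 p) (c * x2 p).

(* initial tangent vector at a of the geodesic from a to b
   (projection of b onto the tangent space T_a H = a^perp) *)
Definition tangent (a b : pt) : pt := padd b (pscale (mink a b) a).

Definition hangle (a b c : pt) : R :=
  let u := tangent a b in let v := tangent a c in
  acos (mink u v / (sqrt (mink u u) * sqrt (mink v v))).

Definition is_rational (x : R) : Prop := exists q : Q, Q2R q = x.

Definition expi_in_Qi (theta : R) : Prop := is_rational (cos theta) /\ is_rational (sin theta).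

Definition is_midpoint (m b c : pt) : Prop :=
  onH m /\ hdist b m = hdist b c / 2 /\ hdist m c = hdist b c / 2.

(* Main.v *)
Require Import Defs.
From Stdlib Require Import Reals Ratan QArith Qreals ZArith Znumtheory Lia Lra Psatz.

Open Scope Z_scope.

Lemma cop_intro a b : (forall d, (d|a) -> (d|b) -> (d|1)) -> Z.gcd a b = 1.
Proof.
  intro H. pose proof (H _ (Z.gcd_divide_l a b) (Z.gcd_divide_r a b)) as H1.
  pose proof (Z.gcd_nonneg a b).
  apply Z.divide_1_r_nonneg in H1; lia.
Qed.

Lemma cop_elim a b d : Z.gcd a b = 1 -> (d|a) -> (d|b) -> (d|1).
Proof. intros H ha hb. rewrite <- H. apply Z.gcd_greatest; auto. Qed.

Lemma divide_pos_1 d : 0 <= d -> (d|1) -> d = 1.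
Proof. intros. apply Z.divide_1_r_nonneg; auto. Qed.

Lemma cop_sq a b : Z.gcd a b = 1 -> Z.gcd a (b*b) = 1.
Proof.
  intro H. apply Zgcd_1_rel_prime. apply rel_prime_mult; apply Zgcd_1_rel_prime; auto.
Qed.

Lemma cop_sym a b : Z.gcd a b = 1 -> Z.gcd b a = 1.
Proof. intro; rewrite Z.gcd_comm; auto. Qed.

Lemma sq_split a b c : 0 < a -> 0 < b -> Z.gcd a b = 1 -> a*b = c*c ->
  exists x, 0 < x /\ a = x*x.
Proof.
  intros ha hb hab hc.
  set (x := Z.gcd a c).
  assert (hx0 : 0 <= x) by apply Z.gcd_nonneg.
  assert (hxn : x <> 0).
  { intro E. apply Z.gcd_eq_0 in E. lia. }
  destruct (Z.gcd_divide_l a c) as [a1 Ha1].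
  destruct (Z.gcd_divide_r a c) as [c1 Hc1].
  fold x in Ha1, Hc1.
  assert (g1 : Z.gcd a1 c1 = 1).
  { apply cop_intro. intros d hd1 hd2.
    assert (hdx : (d*x | Z.gcd a c)).
    { apply Z.gcd_greatest; [rewrite Ha1 | rewrite Hc1]; apply Z.mul_divide_mono_r; auto. }
    fold x in hdx.
    destruct hdx as [k hk].
    exists k. apply Z.mul_reg_r with x; auto. lia. }
  assert (e1 : a1 * b = x * (c1*c1)).
  { apply Z.mul_reg_l with x; auto. rewrite Ha1, Hc1 in hc. nia. }
  assert (d1 : (a1 | (c1*c1) * x)).
  { exists b. lia. }
  apply Z.gauss in d1; [| apply cop_sq; auto].
  destruct d1 as [y Hy].
  assert (a1n : a1 <> 0) by (intro E; rewrite E in Ha1; lia).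
  assert (eb : b = y * (c1*c1)).
  { apply Z.mul_reg_l with a1; auto. rewrite e1, Hy. ring. }
  assert (y1 : (y | 1)).
  { apply cop_elim with a b; auto.
    - exists (a1*a1). rewrite Ha1, Hy. ring.
    - exists (c1*c1). rewrite eb. ring. }
  assert (y0 : 0 <= y) by nia.
  apply divide_pos_1 in y1; auto. subst y.
  exists x. split; lia.
Qed.

Lemma sq_inj x y : 0 <= x -> 0 <= y -> x*x = y*y -> x = y.
Proof. intros. nia. Qed.

Lemma fourth_split a b f : 0 < a -> 0 < b -> 0 < f -> Z.gcd a b = 1 -> a*b = f*f*(f*f) ->
  exists g h, 0 < g /\ 0 < h /\ a = g*g*(g*g) /\ b = h*h*(h*h).
Proof.
  intros ha hb hf hab E.
  destruct (sq_split a b (f*f) ha hb hab ltac:(lia)) as [s [hs Es]].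
  destruct (sq_split b a (f*f) hb ha (cop_sym _ _ hab) ltac:(lia)) as [t [ht Et]].
  assert (st : s*t = f*f).
  { apply sq_inj; [nia|nia|]. subst. nia. }
  assert (gst : Z.gcd s t = 1).
  { apply cop_intro. intros d d1 d2. apply cop_elim with a b; auto.
    - rewrite Es. apply Z.divide_mul_l; auto.
    - rewrite Et. apply Z.divide_mul_l; auto. }
  destruct (sq_split s t f hs ht gst st) as [g [hg Eg]].
  destruct (sq_split t s f ht hs (cop_sym _ _ gst) ltac:(lia)) as [h [hh Eh]].
  exists g, h. subst. repeat split; auto.
Qed.

Lemma odd_cop2 d A : Z.Odd A -> (d | A) -> Z.gcd d 2 = 1.
Proof.
  intros [j hj] hd.
  set (g := Z.gcd d 2).
  assert (g0 : 0 <= g) by apply Z.gcd_nonneg.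
  assert (g2 : (g | 2)) by apply Z.gcd_divide_r.
  assert (gd : (g | d)) by apply Z.gcd_divide_l.
  assert (g <= 2) by (apply Z.divide_pos_le; auto; lia).
  assert (g <> 0).
  { intro E. apply Z.gcd_eq_0 in E. lia. }
  assert (g = 1 \/ g = 2) as [E|E] by lia; auto.
  exfalso. rewrite E in gd. destruct (Z.divide_trans _ _ _ gd hd) as [k hk]. lia.
Qed.

Lemma cop_mul a b c : Z.gcd a b = 1 -> Z.gcd a c = 1 -> Z.gcd a (b*c) = 1.
Proof. intros. apply Zgcd_1_rel_prime. apply rel_prime_mult; apply Zgcd_1_rel_prime; auto. Qed.

Lemma cop_sqsq a b : Z.gcd a b = 1 -> Z.gcd (a*a) (b*b) = 1.
Proof. intros. apply cop_sym, cop_mul; apply cop_sym, cop_mul; auto; apply cop_sym; auto. Qed.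

Definition PP (x y : Z) := x*x*(x*x) + x*x*(y*y) + y*y*(y*y).

Lemma odd_sq_odd x : Z.Odd (x*x) -> Z.Odd x.
Proof.
  intro H. destruct (Z.Even_or_Odd x) as [[k hk]|]; auto.
  destruct H as [j hj]. subst. lia.
Qed.

Lemma step m f z : 0 < m -> 0 < f -> Z.gcd m (2*f) = 1 -> Z.Odd m ->
  PP m (2*f) = z*z ->
  exists K L h, 0 < K /\ 0 < L /\ Z.gcd K L = 1 /\ K*L <= f /\ PP K L = h*h.
Proof.
  unfold PP. intros hm hf hg [i hi] Ez.
  assert (Ez' : PP m (2*f) = Z.abs z * Z.abs z) by (unfold PP; rewrite Ez; rewrite <- Z.abs_mul; symmetry; apply Z.abs_eq; nia).
  clear Ez. unfold PP in Ez'. remember (Z.abs z) as zz. assert (0 <= zz) by lia.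
  clear z Heqzz. rename zz into z.
  destruct (Z.Even_or_Odd z) as [[k hk]|[k hk]].
  { exfalso. subst. ring_simplify in Ez'. lia. }
  assert (k0 : 0 <= k) by lia.
  set (al := k - 2*i*i - 2*i - f*f).
  set (be := al + m*m + 2*(f*f)).
  assert (Eab : al * be = 3*(f*f*(f*f))).
  { unfold be, al. subst m z. ring_simplify in Ez'. ring_simplify. lia. }
  assert (hbe : 0 < be) by (unfold be, al; subst m; assert (0 <= i*i) by nia; assert (0 <= f*f) by nia; lia).
  assert (hal : 0 < al).
  { assert (hf4 : 0 < f*f*(f*f)) by (apply Z.mul_pos_pos; apply Z.mul_pos_pos; lia).
    apply (Z.mul_pos_cancel_r al be hbe). lia. }
  assert (gab : Z.gcd al be = 1).
  { apply cop_intro. intros d d1 d2.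
    assert (gdf : Z.gcd d f = 1).
    { apply cop_intro. intros x x1 x2.
      apply cop_elim with (m*m) (2*f).
      - apply cop_sym, cop_sq, cop_sym; auto.
      - assert (Hdv : (x | be - al)) by (apply Z.divide_sub_r; apply Z.divide_trans with d; auto).
        unfold be in Hdv. replace (al + m*m + 2*(f*f) - al) with (f*(2*f) + m*m) in Hdv by ring.
        apply (Z.divide_add_cancel_r _ _ _ (Z.divide_mul_l _ _ _ x2)) in Hdv. 
        auto.
      - apply Z.divide_mul_r; auto. }
    assert (g4 : Z.gcd (f*f*(f*f)) (d*d) = 1).
    { apply cop_sym, cop_sqsq. apply cop_mul; auto. }
    assert (dd : (d*d | (f*f*(f*f)) * 3)).
    { replace (f*f*(f*f)*3) with (al*be) by lia. destruct d1 as [a1 h1]; destruct d2 as [b1 h2]; exists (a1*b1); rewrite h1, h2; ring. }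
    apply Z.gauss in dd; [|apply cop_sym; auto].
    assert (d*d <= 3) by (apply Z.divide_pos_le; auto; lia).
    assert (d <> 0) by (intro; subst d; destruct dd as [q hq]; lia).
    assert (d = 1 \/ d = -1) as [->| ->] by nia.
    - apply Z.divide_refl.
    - exists (-1). lia. }
  assert (d3 : (3 | al * be)) by (rewrite Eab; apply Z.divide_mul_l, Z.divide_refl).
  apply prime_mult in d3; [|exact prime_3].
  destruct d3 as [[a' ha']|[b' hb']].
  -
    assert (ha'0 : 0 < a') by lia.
    assert (g' : Z.gcd a' be = 1).
    { apply cop_intro; intros x x1 x2. apply cop_elim with al be; auto.
      rewrite ha'. apply Z.divide_mul_l; auto. }
    assert (E4 : a'*be = f*f*(f*f)) by (rewrite ha' in Eab; lia).
    destruct (fourth_split a' be f ha'0 hbe hf g' E4) as [g [h [hg0 [hh0 [Eg Eh]]]]].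
    assert (fgh : f*f = g*g*(h*h)).
    { apply sq_inj; [apply Z.square_nonneg|apply Z.mul_nonneg_nonneg; apply Z.square_nonneg|].
      rewrite <- E4, Eg, Eh. ring. }
    assert (Ef : f = g*h).
    { apply sq_inj; [lia|apply Z.mul_nonneg_nonneg; lia|]. rewrite fgh. ring. }
    assert (Em : m*m = (h*h+g*g)*(h*h-3*(g*g))).
    { assert (Hm : m*m = be - al - 2*(f*f)) by (unfold be; ring).
      rewrite Hm, ha', Eg, Eh, fgh. ring. }
    assert (ggh : Z.gcd g h = 1).
    { apply cop_intro; intros x x1 x2. apply cop_elim with al be; auto.
      - rewrite ha', Eg. apply Z.divide_mul_l. apply Z.divide_mul_l. apply Z.divide_mul_l; auto.
      - rewrite Eh. apply Z.divide_mul_l. apply Z.divide_mul_l; auto. }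
    assert (oA : Z.Odd (h*h+g*g)).
    { destruct (Z.Even_or_Odd g) as [[a Ea]|[a Ea]]; destruct (Z.Even_or_Odd h) as [[b Eb]|[b Eb]].
      - exfalso. assert (H2 : (2 | 1)).
        { apply cop_elim with g h; auto; [exists a|exists b]; lia. }
        apply Z.divide_pos_le in H2; lia.
      - exists (2*b*b+2*b+2*a*a). subst; ring.
      - exists (2*b*b+2*a*a+2*a). subst; ring.
      - exfalso. clear -Em hi Ea Eb. subst. ring_simplify in Em. lia. }
    clear Eg Eh ha' g' ha'0 Eab gab hal hbe.
    set (A := h*h+g*g) in *. set (B := h*h-3*(g*g)) in *.
    assert (hA : 0 < A).
    { assert (0 < h*h) by (apply Z.mul_pos_pos; lia). assert (0 < g*g) by (apply Z.mul_pos_pos; lia).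
      unfold A; lia. }
    assert (hB : 0 < B).
    { apply (proj1 (Z.mul_pos_cancel_l A B hA)). rewrite <- Em. apply Z.mul_pos_pos; lia. }
    assert (gAB : Z.gcd A B = 1).
    { apply cop_intro; intros x x1 x2.
      assert (x2' : Z.gcd x 2 = 1) by (apply odd_cop2 with A; auto).
      assert (xg : (x | g*g)).
      { assert (Hx : (x | 2*(2*(g*g)))).
        { replace (2*(2*(g*g))) with (A - B) by (unfold A, B; ring). apply Z.divide_sub_r; auto. }
        apply Z.gauss in Hx; auto. apply Z.gauss in Hx; auto. }
      assert (xh : (x | h*h)).
      { assert (Hx : (x | 2*(2*(h*h)))).
        { replace (2*(2*(h*h))) with (3*A + B) by (unfold A, B; ring).
          apply Z.divide_add_r; auto. apply Z.divide_mul_r; auto. }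
        apply Z.gauss in Hx; auto. apply Z.gauss in Hx; auto. }
      apply cop_elim with (g*g) (h*h); auto. apply cop_sqsq; auto. }
    destruct (sq_split A B m hA hB gAB ltac:(lia)) as [r [hr Er]].
    destruct (sq_split B A m hB hA (cop_sym _ _ gAB) ltac:(lia)) as [s [hs Es]].
    assert (or : Z.Odd r) by (apply odd_sq_odd; rewrite <- Er; auto).
    assert (os : Z.Odd s).
    { apply odd_sq_odd; rewrite <- Es. destruct oA as [j hj]. exists (j - 2*(g*g)).
      unfold B. unfold A in hj. lia. }
    destruct or as [r' hr']. destruct os as [s' hs'].
    set (kk := r' - s'). set (ll := r' + s' + 1).
    assert (rs2 : r*r - s*s = 4*(g*g)) by (rewrite <- Er, <- Es; unfold A, B; ring).
    assert (Ekl : kk*ll = g*g).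
    { assert (4*(kk*ll) = r*r - s*s) by (unfold kk, ll; rewrite hr', hs'; ring). lia. }
    assert (rs : s < r).
    { destruct (Z.lt_ge_cases s r) as [|hsr]; auto. exfalso.
      assert (r*r <= s*s) by (apply Z.mul_le_mono_nonneg; lia).
      assert (0 < g*g) by (apply Z.mul_pos_pos; lia). lia. }
    assert (hkk : 0 < kk) by (unfold kk; lia).
    assert (hll : 0 < ll) by (unfold ll; lia).
    assert (gkl : Z.gcd kk ll = 1).
    { apply cop_intro; intros x x1 x2. apply cop_elim with A B; auto.
      - rewrite Er. apply Z.divide_mul_l. replace r with (kk+ll) by (unfold kk, ll; lia).
        apply Z.divide_add_r; auto.
      - rewrite Es. apply Z.divide_mul_l. replace s with (ll-kk) by (unfold kk, ll; lia).
        apply Z.divide_sub_r; auto. }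
    destruct (sq_split kk ll g hkk hll gkl Ekl) as [K [hK EK]].
    destruct (sq_split ll kk g hll hkk (cop_sym _ _ gkl) ltac:(lia)) as [L [hL EL]].
    exists K, L, h. split; [auto|split; [auto|split; [|split]]].
    + apply cop_intro; intros x x1 x2. apply cop_elim with kk ll; auto.
      * rewrite EK. apply Z.divide_mul_l; auto.
      * rewrite EL. apply Z.divide_mul_l; auto.
    + assert (HKL : K*L = g).
      { apply sq_inj; [apply Z.mul_nonneg_nonneg; lia|lia|]. rewrite <- Ekl, EK, EL. ring. }
      rewrite HKL, Ef. assert (0 <= g*(h-1)) by (apply Z.mul_nonneg_nonneg; lia).
      assert (g*(h-1) = g*h - g) by ring. lia.
    + assert (E5 : 3*(r*r) + s*s = 4*(h*h)) by (rewrite <- Er, <- Es; unfold A, B; ring).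
      assert (Hr2 : r = K*K + L*L) by (rewrite <- EK, <- EL; unfold kk, ll; lia).
      assert (Hs2 : s = L*L - K*K) by (rewrite <- EK, <- EL; unfold kk, ll; lia).
      assert (4*(K*K*(K*K) + K*K*(L*L) + L*L*(L*L)) = 4*(h*h)) by (rewrite <- E5, Hr2, Hs2; ring).
      lia.
  -
    assert (hb'0 : 0 < b') by lia.
    assert (g' : Z.gcd al b' = 1).
    { apply cop_intro; intros x x1 x2. apply cop_elim with al be; auto.
      rewrite hb'. apply Z.divide_mul_l; auto. }
    assert (E4 : al*b' = f*f*(f*f)) by (rewrite hb' in Eab; lia).
    destruct (fourth_split al b' f hal hb'0 hf g' E4) as [h [g [hh0 [hg0 [Eh Eg]]]]].
    exfalso.
    assert (fgh : f*f = g*g*(h*h)).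
    { apply sq_inj; [apply Z.square_nonneg|apply Z.mul_nonneg_nonneg; apply Z.square_nonneg|].
      rewrite <- E4, Eg, Eh. ring. }
    assert (Em : m*m = (3*(g*g)+h*h)*(g*g-h*h)).
    { assert (Hm : m*m = be - al - 2*(f*f)) by (unfold be; ring).
      rewrite Hm, hb', Eg, Eh, fgh. ring. }
    clear -Em hi.
    destruct (Z.Even_or_Odd g) as [[a ->]|[a ->]]; destruct (Z.Even_or_Odd h) as [[b ->]|[b ->]];
    subst m; ring_simplify in Em; lia.
Qed.

Lemma NT_main : forall n : nat, forall m e z, 0 < m -> 0 < e -> Z.gcd m e = 1 ->
  m*e < Z.of_nat n -> PP m e = z*z -> False.
Proof.
  induction n as [|n IH]; intros m e z hm he g hn E.
  { nia. }
  destruct (Z.Even_or_Odd m) as [[a Ea]|om]; destruct (Z.Even_or_Odd e) as [[b Eb]|oe].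
  - assert (H2 : (2 | 1)) by (apply cop_elim with m e; auto; [exists a|exists b]; lia).
    apply Z.divide_pos_le in H2; lia.
  - destruct (step e a z) as [K [L [h [hK [hL [gKL [le E']]]]]]]; auto; try lia.
    + apply cop_sym. rewrite <- Ea. auto.
    + rewrite <- Ea, <- E. unfold PP. ring.
    + apply (IH K L h); auto. nia.
  - destruct (step m b z) as [K [L [h [hK [hL [gKL [le E']]]]]]]; auto; try lia.
    + rewrite <- Eb. auto.
    + rewrite <- Eb, <- E. unfold PP. ring.
    + apply (IH K L h); auto. nia.
  - destruct om as [a ->]. destruct oe as [b ->]. unfold PP in E.
    assert (Ea : (2*a+1)*(2*a+1) = 4*(a*a+a)+1) by ring.
    assert (Eb : (2*b+1)*(2*b+1) = 4*(b*b+b)+1) by ring.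
    rewrite Ea, Eb in E. set (u := a*a+a) in E. set (v := b*b+b) in E. clearbody u v.
    assert (E2 : 4*(4*(u*u)+2*u+4*(u*v)+u+v+4*(v*v)+2*v) + 3 = z*z) by (rewrite <- E; ring).
    clear E.
    destruct (Z.Even_or_Odd z) as [[c ->]|[c ->]].
    + assert ((2*c)*(2*c) = 4*(c*c)) by ring. lia.
    + assert ((2*c+1)*(2*c+1) = 4*(c*c+c)+1) by ring. lia.
Qed.

Lemma SQ N s r : s <> 0 -> N * (s*s) = r*r -> exists y, N = y*y.
Proof.
  intros hs E.
  set (g := Z.gcd r s).
  assert (g0 : g <> 0) by (intro H; apply Z.gcd_eq_0 in H; lia).
  destruct (Z.gcd_divide_l r s) as [r1 Hr]. destruct (Z.gcd_divide_r r s) as [s1 Hs].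
  fold g in Hr, Hs.
  assert (g1 : Z.gcd r1 s1 = 1).
  { pose proof (Z.gcd_div_gcd r s g g0 eq_refl) as H.
    rewrite Hr, Hs, !Z.div_mul in H; auto. }
  assert (E1 : N * (s1*s1) = r1*r1).
  { apply Z.mul_reg_l with (g*g). nia. rewrite Hr, Hs in E. nia. }
  assert (d : (s1 | r1 * r1)) by (exists (N*s1); nia).
  apply Z.gauss in d; [|apply cop_sym; auto].
  assert (d1 : (s1 | 1)) by (apply cop_elim with r1 s1; auto; apply Z.divide_refl).
  exists r1. rewrite <- E1. destruct (Z.divide_1_r _ d1) as [-> | ->]; ring.
Qed.

Lemma NT_final m e z : 0 < m -> 0 < e -> PP m e = z*z -> False.
Proof.
  intros hm he E.
  set (d := Z.gcd m e).
  assert (d0 : d <> 0) by (intro H; apply Z.gcd_eq_0 in H; lia).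
  assert (dp : 0 <= d) by apply Z.gcd_nonneg.
  destruct (Z.gcd_divide_l m e) as [m1 Hm]. destruct (Z.gcd_divide_r m e) as [e1 He].
  fold d in Hm, He.
  assert (g1 : Z.gcd m1 e1 = 1).
  { pose proof (Z.gcd_div_gcd m e d d0 eq_refl) as H.
    rewrite Hm, He, !Z.div_mul in H; auto. }
  destruct (SQ (PP m1 e1) (d*d) z) as [y hy].
  - nia.
  - rewrite <- E, Hm, He. unfold PP. ring.
  - apply (NT_main (Z.to_nat (m1*e1 + 1)) m1 e1 y); try nia; auto.
Qed.

Close Scope Z_scope.
Open Scope R_scope.

Lemma rat_plus x y : is_rational x -> is_rational y -> is_rational (x + y).
Proof. intros [p <-] [q <-]. exists (p + q)%Q. apply Q2R_plus. Qed.
Lemma rat_mult x y : is_rational x -> is_rational y -> is_rational (x * y).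
Proof. intros [p <-] [q <-]. exists (p * q)%Q. apply Q2R_mult. Qed.
Lemma rat_opp x : is_rational x -> is_rational (- x).
Proof. intros [p <-]. exists (- p)%Q. apply Q2R_opp. Qed.
Lemma rat_minus x y : is_rational x -> is_rational y -> is_rational (x - y).
Proof. intros [p <-] [q <-]. exists (p - q)%Q. apply Q2R_minus. Qed.
Lemma rat_inv x : is_rational x -> is_rational (/ x).
Proof.
  intros [p <-]. destruct (Qeq_dec p 0) as [e|n].
  - exists 0%Q. rewrite (Qeq_eqR _ _ e). unfold Q2R; simpl. rewrite !Rmult_0_l, Rinv_0. reflexivity.
  - exists (/ p)%Q. apply Q2R_inv; auto.
Qed.
Lemma rat_div x y : is_rational x -> is_rational y -> is_rational (x / y).
Proof. intros. unfold Rdiv. apply rat_mult; auto. apply rat_inv; auto. Qed.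
Lemma rat_1 : is_rational 1.
Proof. exists 1%Q. unfold Q2R; simpl. lra. Qed.
Lemma rat_2 : is_rational 2.
Proof. exists 2%Q. unfold Q2R; simpl. lra. Qed.

Lemma L1 u d : arcosh u = d -> 0 < d -> u = (exp d + / exp d) / 2.
Proof.
  unfold arcosh. intros H hd.
  set (X := u + sqrt (u * u - 1)) in *.
  assert (hX : 0 < X).
  { destruct (Rlt_dec 0 X) as [h|h]; auto. exfalso.
    unfold ln in H. destruct (Rlt_dec 0 X); [contradiction|]. lra. }
  assert (eX : exp d = X) by (rewrite <- H; apply exp_ln; auto).
  assert (X1 : 1 < X) by (rewrite <- eX, <- exp_0; apply exp_increasing; auto).
  destruct (Rlt_dec (u*u - 1) 0) as [n|n].
  - exfalso. unfold X in X1. rewrite sqrt_neg_0 in X1 by lra. nra.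
  - assert (sq : sqrt (u*u-1) * sqrt (u*u-1) = u*u-1) by (apply sqrt_sqrt; lra).
    assert (K : X*X + 1 = 2*u*X) by (unfold X; nra).
    rewrite eX. apply Rmult_eq_reg_r with (2 * X); [|lra].
    field_simplify; [|lra]. lra.
Qed.

Lemma no_rat t Y : is_rational t -> 0 < t -> is_rational Y -> t*t*(t*t) + t*t + 1 = Y*Y -> False.
Proof.
  intros [q Hq] ht [y Hy] E.
  destruct q as [P D]. destruct y as [R S]. unfold Q2R in Hq, Hy. simpl in Hq, Hy.
  assert (hD : 0 < IZR (Z.pos D)) by (apply IZR_lt; lia).
  assert (hS : 0 < IZR (Z.pos S)) by (apply IZR_lt; lia).
  assert (eP : IZR P = t * IZR (Z.pos D)) by (rewrite <- Hq; field; lra).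
  assert (eR : IZR R = Y * IZR (Z.pos S)) by (rewrite <- Hy; field; lra).
  assert (P0 : (0 < P)%Z) by (apply lt_IZR; rewrite eP; nra).
  assert (EZ : (PP P (Z.pos D) * (Z.pos S * Z.pos S) = (R * Z.pos D * Z.pos D) * (R * Z.pos D * Z.pos D))%Z).
  { apply eq_IZR. unfold PP. rewrite !mult_IZR, !plus_IZR, !mult_IZR, eP, eR.
    transitivity (IZR (Z.pos D)*IZR (Z.pos D)*(IZR (Z.pos D)*IZR (Z.pos D)) * (IZR (Z.pos S)*IZR (Z.pos S)) * (t*t*(t*t)+t*t+1)); [ring|].
    rewrite E. ring. }
  destruct (SQ _ (Z.pos S) _ ltac:(lia) EZ) as [z hz].
  apply (NT_final P (Z.pos D) z); auto. lia.
Qed.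

Lemma mink_sym a b : mink a b = mink b a.
Proof. unfold mink; ring. Qed.

Lemma mink_tangent a b c : mink (tangent a b) (tangent a c) =
  mink b c + 2 * mink a b * mink a c + mink a b * mink a c * mink a a.
Proof. unfold tangent, mink, padd, pscale; simpl. ring. Qed.

Lemma timelike s0 s1 s2 d0 d1 d2 : -s0*s0+s1*s1+s2*s2 < 0 -> -d0*s0+d1*s1+d2*s2 = 0 ->
  -d0*d0+d1*d1+d2*d2 = 0 -> d0 = 0 /\ d1 = 0 /\ d2 = 0.
Proof.
  intros H1 H2 H3.
  assert (CS : (d0*s0)*(d0*s0) <= (d1*d1+d2*d2)*(s1*s1+s2*s2)).
  { replace (d0*s0) with (d1*s1+d2*s2) by lra.
    assert (0 <= (d1*s2-d2*s1)*(d1*s2-d2*s1)) by apply Rle_0_sqr.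
    lra. }
  replace (d1*d1+d2*d2) with (d0*d0) in CS by lra.
  assert (K : d0*d0*(s0*s0 - s1*s1 - s2*s2) <= 0).
  { replace (d0*d0*(s0*s0 - s1*s1 - s2*s2)) with (d0*s0*(d0*s0) - d0*d0*(s1*s1+s2*s2)) by ring. lra. }
  assert (d0*d0 <= 0).
  { destruct (Rle_dec (d0*d0) 0); auto. exfalso.
    assert (0 < d0*d0*(s0*s0 - s1*s1 - s2*s2)) by (apply Rmult_lt_0_compat; lra). lra. }
  assert (d0 = 0) by nra. subst.
  assert (0 <= d1*d1) by apply Rle_0_sqr. assert (0 <= d2*d2) by apply Rle_0_sqr.
  split; [auto|split; nra].
Qed.

Lemma hd_cosh p q d : hdist p q = d -> 0 < d -> - mink p q = (exp d + / exp d) / 2.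
Proof. intros. apply L1; auto. Qed.

Lemma Rsq_inj x y : 0 <= x -> 0 <= y -> x*x = y*y -> x = y.
Proof. intros. nra. Qed.

Theorem proposition4p2 (A B C : pt) (a : R) :
  onH A -> onH B -> onH C ->
  0 < a ->
  hdist A B = a -> hdist B C = a -> hdist C A = a ->
  (is_rational (exp a) \/ expi_in_Qi (hangle A B C)) ->
  forall M : pt, is_midpoint M B C ->
  ~ is_rational (exp (hdist A M)).
Proof.
  intros [hA _] [hB _] [hC _] ha hAB hBC hCA hyp M [[hM _] [hBM hMC]] hrat.
  rewrite hBC in hBM, hMC.
  set (t := exp (a/2)).
  assert (t1 : 1 < t) by (unfold t; rewrite <- exp_0; apply exp_increasing; lra).
  assert (Ea : exp a = t * t) by (unfold t; rewrite <- exp_plus; f_equal; lra).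
  set (c := (t*t + /(t*t))/2).
  set (w := (t + /t)/2).
  assert (eAB : mink A B = - c) by (unfold c; rewrite <- Ea; pose proof (hd_cosh _ _ _ hAB ha); lra).
  assert (eBC : mink B C = - c) by (unfold c; rewrite <- Ea; pose proof (hd_cosh _ _ _ hBC ha); lra).
  assert (eAC : mink A C = - c) by (rewrite mink_sym; unfold c; rewrite <- Ea; pose proof (hd_cosh _ _ _ hCA ha); lra).
  assert (eBM : mink M B = - w) by (rewrite mink_sym; unfold w, t; pose proof (hd_cosh _ _ _ hBM ltac:(lra)); lra).
  assert (eMC : mink M C = - w) by (unfold w, t; pose proof (hd_cosh _ _ _ hMC ltac:(lra)); lra).
  assert (tn : t <> 0) by lra.
  assert (hw : 0 < w) by (unfold w; assert (0 < /t) by (apply Rinv_0_lt_compat; lra); lra).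
  assert (wc : 4*(w*w) = 2 + 2*c) by (unfold w, c; field; auto).
  (* the midpoint is (B+C)/(2w) *)
  set (s0 := x0 B + x0 C). set (s1 := x1 B + x1 C). set (s2 := x2 B + x2 C).
  destruct (timelike s0 s1 s2 (x0 M - s0/(2*w)) (x1 M - s1/(2*w)) (x2 M - s2/(2*w))) as [D0 [D1 D2]].
  - replace (-s0*s0+s1*s1+s2*s2) with (mink B B + 2*mink B C + mink C C) by (unfold s0, s1, s2, mink; ring).
    rewrite hB, hC, eBC. unfold c. assert (0 < /(t*t)) by (apply Rinv_0_lt_compat; nra). nra.
  - replace (- (x0 M - s0 / (2 * w)) * s0 + (x1 M - s1 / (2 * w)) * s1 + (x2 M - s2 / (2 * w)) * s2)
      with ((mink M B + mink M C) - (mink B B + 2*mink B C + mink C C)/(2*w))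
      by (unfold s0, s1, s2, mink; field; lra).
    rewrite hB, hC, eBC, eBM, eMC. field_simplify; [|lra]. nra.
  - replace (- (x0 M - s0 / (2 * w)) * (x0 M - s0 / (2 * w)) + (x1 M - s1 / (2 * w)) * (x1 M - s1 / (2 * w)) +
      (x2 M - s2 / (2 * w)) * (x2 M - s2 / (2 * w)))
      with (mink M M - (mink M B + mink M C)/w + (mink B B + 2*mink B C + mink C C)/(4*(w*w)))
      by (unfold s0, s1, s2, mink; field; lra).
    rewrite hB, hC, eBC, eBM, eMC, hM. field_simplify; [|lra]. nra.
  - assert (eAM : mink A M = - c / w).
    { replace (mink A M) with ((mink A B + mink A C)/(2*w)).
      - rewrite eAB, eAC. field. lra.
      - unfold mink. replace (x0 M) with (s0/(2*w)) by lra. replace (x1 M) with (s1/(2*w)) by lra.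
        replace (x2 M) with (s2/(2*w)) by lra. unfold s0, s1, s2. field. lra. }
    unfold hdist in hrat. rewrite eAM in hrat. replace (- (- c / w)) with (c / w) in hrat by (field; lra).
    unfold arcosh in hrat.
    set (u := c / w) in *.
    assert (uform : u = (t*t*(t*t)+1)/(t*(t*t+1))) by (unfold u, c, w; field; nra).
    assert (key : u*u - 1 = (t*t-1)*(t*t-1)*(t*t*(t*t)+t*t+1)/(t*t*((t*t+1)*(t*t+1)))).
    { rewrite uform. field. nra. }
    assert (u1 : 0 <= u*u - 1).
    { assert (t2 : 0 < t*t) by nra. assert (t4 : 0 < t*t*(t*t)) by nra.
      rewrite key. apply Rmult_le_pos; [apply Rmult_le_pos; [apply Rle_0_sqr|lra]|].
      left. apply Rinv_0_lt_compat. apply Rmult_lt_0_compat; [lra|]. nra. }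
    assert (u0 : 0 < u) by (rewrite uform; apply Rdiv_lt_0_compat; nra).
    set (q := sqrt (u*u-1)) in *.
    assert (qq : q*q = u*u-1) by (apply sqrt_sqrt; auto).
    assert (q0 : 0 <= q) by apply sqrt_pos.
    rewrite exp_ln in hrat by lra.
    assert (inv : u - q = /(u+q)).
    { apply Rmult_eq_reg_l with (u+q); [rewrite Rinv_r; nra|lra]. }
    assert (rq : is_rational q).
    { replace q with (((u+q) - /(u+q))/2) by (rewrite <- inv; field).
      apply rat_div; [apply rat_minus; [auto|apply rat_inv; auto]|apply rat_2]. }
    assert (ru : is_rational u).
    { replace u with (((u+q) + /(u+q))/2) by (rewrite <- inv; field).
      apply rat_div; [apply rat_plus; [auto|apply rat_inv; auto]|apply rat_2]. }
    assert (rt : is_rational t).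
    { assert (c1 : c - 1 = (t*t-1)*(t*t-1)/(2*(t*t))) by (unfold c; field; lra).
      assert (hc : 1 < c) by (assert (tt1 : 0 < t*t-1) by nra; assert (0 < (t*t-1)*(t*t-1)/(2*(t*t))) by (apply Rdiv_lt_0_compat; [apply Rmult_lt_0_compat; lra|lra]); lra).
      assert (wu : w = c / u) by (unfold u; field; lra).
      destruct hyp as [rE | [rcos rsin]].
      - rewrite Ea in rE.
        assert (rc : is_rational c) by (unfold c; apply rat_div; [apply rat_plus; [auto|apply rat_inv; auto]|apply rat_2]).
        assert (rw : is_rational w) by (rewrite wu; apply rat_div; auto).
        replace t with ((t*t+1)/(2*w)) by (unfold w; field; nra).
        apply rat_div; [apply rat_plus; [auto|apply rat_1]|apply rat_mult; [apply rat_2|auto]].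
      - assert (eang : hangle A B C = acos (c/(c+1))).
        { unfold hangle; cbv zeta. rewrite !mink_tangent, eAB, eAC, eBC, hA, hB, hC.
          rewrite sqrt_sqrt by nra. f_equal. field. nra. }
        rewrite eang in rcos, rsin.
        set (x := c/(c+1)) in *.
        assert (x01 : 0 <= x <= 1).
        { assert (i0 : 0 < /(c+1)) by (apply Rinv_0_lt_compat; lra).
          assert (i1 : /(c+1) < 1) by (rewrite <- Rinv_1; apply Rinv_lt_contravar; lra).
          assert (xe : x = 1 - /(c+1)) by (unfold x; field; lra). lra. }
        rewrite cos_acos in rcos by lra.
        rewrite sin_acos in rsin by lra.
        assert (rc : is_rational c).
        { replace c with (x/(1-x)) by (unfold x; field; lra).
          apply rat_div; [auto|apply rat_minus; [apply rat_1|auto]]. }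
        set (sg := sqrt (1 - x²)) in *.
        assert (sgsg : sg*sg = 1 - x*x) by (unfold sg; rewrite sqrt_sqrt; unfold Rsqr; nra).
        assert (sg0 : 0 <= sg) by apply sqrt_pos.
        set (rho := sg*(c+1)).
        assert (rr : rho*rho = 2*c+1).
        { unfold rho. replace (sg*(c+1)*(sg*(c+1))) with ((sg*sg)*((c+1)*(c+1))) by ring.
          rewrite sgsg. unfold x. field. lra. }
        assert (rho0 : 0 < rho).
        { assert (0 <= rho) by (unfold rho; apply Rmult_le_pos; lra).
          destruct (Rle_lt_or_eq_dec 0 rho) as [|e]; auto. rewrite <- e in rr. lra. }
        set (v := (t - /t)/2).
        assert (v0 : 0 <= v).
        { unfold v. assert (/t < 1) by (rewrite <- Rinv_1; apply Rinv_lt_contravar; lra). lra. }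
        assert (vr : v*rho = q*w).
        { apply Rsq_inj; [nra|nra|].
          replace (v*rho*(v*rho)) with ((v*v)*(rho*rho)) by ring.
          replace (q*w*(q*w)) with ((q*q)*(w*w)) by ring.
          rewrite rr, qq. unfold v, u, c, w. field. nra. }
        replace t with (w + q*w/rho).
        + apply rat_plus; [rewrite wu; apply rat_div; auto|].
          apply rat_div; [apply rat_mult; [auto|rewrite wu; apply rat_div; auto]|].
          unfold rho. apply rat_mult; [auto|apply rat_plus; [auto|apply rat_1]].
        + rewrite <- vr. unfold v, w. field. lra. }
    set (Y := q*t*(t*t+1)/(t*t-1)).
    apply (no_rat t Y rt ltac:(lra)).
    + unfold Y. apply rat_div; [apply rat_mult; [apply rat_mult; auto|apply rat_plus; [apply rat_mult; auto|apply rat_1]]|].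
      apply rat_minus; [apply rat_mult; auto|apply rat_1].
    + unfold Y. replace (q * t * (t * t + 1) / (t * t - 1) * (q * t * (t * t + 1) / (t * t - 1)))
        with ((q*q) * (t * (t * t + 1) / (t * t - 1))*(t * (t * t + 1) / (t * t - 1))) by (field; nra).
      rewrite qq, key. field. nra.
Qed.
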